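(* Let $V_k$ be the complex vector space spanned by all $\Gamma^\mu_r$ with $1\le r\le u-1$ and $\mu\in r-1+2\mathbb Z$. Then $V_k$ is spanned by $\{\Gamma^\mu_r:(\mu;r)\in\mathbf B_k\}$, where $\mathbf B_k$ is the set of pairs $(\mu;r)$ of integers with $\mu\equiv r-1\pmod 2$ and: if $u$ is odd, $0\le\mu\le w$ and $1\le r\le\frac{u-1}2$; if $u$ is even, either $0\le\mu\le w$ and $1\le r\le\frac u2-1$, or $0\le\mu\le\frac w2$ and $r=\frac u2$.
   Context: $u,v\in\mathbb Z_{\ge2}$ coprime with $u<2v$; $k=-2+u/v<0$, $w=2v-u$, $\mathbb L=2w\mathbb Z$. $\chi^{u,v}_{r,s}(q)=\eta(q)^{-1}\sum_{n\in\mathbb Z}(q^{(2uvn+vr-us)^2/4uv}-q^{(2uvn+vr+us)^2/4uv})$, $\eta$ Dedekind's eta. For $\mu\in\frac1v\mathbb Z$, $\theta'_{\mu+\mathbb L}(q)=-\frac1{2w}\sum_{\lambda\in\mu+\mathbb L}\lambda q^{-\lambda^2/4k}$. For $1\le r\le u-1$ and $\mu\in r-1+2\mathbb Z$, $$\Gamma^\mu_r(q)=\sum_{s=1}^{v-1}(-1)^{s-1}\frac{\chi^{u,v}_{r,s}(q)}{\eta(q)}\big[\theta'_{\mu+sk+\mathbb L}(q)-\theta'_{\mu-sk+\mathbb L}(q)\big].$$ *)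

(* Defs.v *)
From Stdlib Require Import Reals ZArith List ClassicalEpsilon.
Open Scope R_scope.

Record Cx : Type := mkC { Re : R; Im : R }.
Definition C0 : Cx := mkC 0 0.
Definition C1 : Cx := mkC 1 0.
Definition RtoC (a : R) : Cx := mkC a 0.
Definition Cadd (z w : Cx) : Cx := mkC (Re z + Re w) (Im z + Im w).
Definition Copp (z : Cx) : Cx := mkC (- Re z) (- Im z).
Definition Csub (z w : Cx) : Cx := Cadd z (Copp w).
Definition Cmul (z w : Cx) : Cx :=
  mkC (Re z * Re w - Im z * Im w) (Re z * Im w + Im z * Re w).
Definition Cinv (z : Cx) : Cx :=
  let n := Re z * Re z + Im z * Im z in mkC (Re z / n) (- Im z / n).
Definition Cdiv (z w : Cx) : Cx := Cmul z (Cinv w).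
Definition Csum (l : list Cx) : Cx := fold_right Cadd C0 l.

(** Limits of complex sequences (componentwise), and the chosen limit
    (an arbitrary value if the sequence diverges). *)
Definition Climit (s : nat -> Cx) (l : Cx) : Prop :=
  Un_cv (fun n => Re (s n)) (Re l) /\ Un_cv (fun n => Im (s n)) (Im l).
Definition Clim (s : nat -> Cx) : Cx :=
  epsilon (inhabits C0) (fun l => Climit s l).

Fixpoint zpsum (f : Z -> Cx) (N : nat) : Cx :=
  match N with
  | O => f 0%Z
  | S M => Cadd (zpsum f M)
                (Cadd (f (Z.of_nat (S M))) (f (- Z.of_nat (S M))%Z))
  end.
Definition zsum (f : Z -> Cx) : Cx := Clim (zpsum f).

(** * q-powers.  tau = x + i y in the upper half-plane (y > 0),
    q = e^{2 pi i tau}, and  q^a := e^{2 pi i a tau}  for real a. *)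
Definition qpow (a x y : R) : Cx :=
  mkC (exp (- 2 * PI * a * y) * cos (2 * PI * a * x))
      (exp (- 2 * PI * a * y) * sin (2 * PI * a * x)).

Fixpoint eta_pprod (x y : R) (N : nat) : Cx :=
  match N with
  | O => C1
  | S M => Cmul (eta_pprod x y M) (Csub C1 (qpow (INR (S M)) x y))
  end.
Definition eta (x y : R) : Cx := Cmul (qpow (1/24) x y) (Clim (eta_pprod x y)).

Definition chi (u v r s : Z) (x y : R) : Cx :=
  Cdiv
    (zsum (fun n =>
       Csub (qpow (IZR ((2*u*v*n + v*r - u*s)^2) / IZR (4*u*v)) x y)
            (qpow (IZR ((2*u*v*n + v*r + u*s)^2) / IZR (4*u*v)) x y)))
    (eta x y).

Definition klev (u v : Z) : R := -2 + IZR u / IZR v.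
Definition wpar (u v : Z) : Z := (2*v - u)%Z.

Definition theta' (u v : Z) (mu : R) (x y : R) : Cx :=
  Cmul (RtoC (- 1 / (2 * IZR (wpar u v))))
    (zsum (fun m =>
       let lam := mu + IZR (2 * wpar u v * m) in
       Cmul (RtoC lam) (qpow (- lam ^ 2 / (4 * klev u v)) x y))).

Definition Gamma (u v mu r : Z) (x y : R) : Cx :=
  Csum (map (fun n : nat =>
    let s := Z.of_nat n in
    let ks := IZR s * klev u v in
    Cmul (RtoC ((-1) ^ (n - 1)))
      (Cmul (Cdiv (chi u v r s x y) (eta x y))
            (Csub (theta' u v (IZR mu + ks) x y)
                  (theta' u v (IZR mu - ks) x y))))
    (seq 1 (Z.to_nat v - 1))).

Definition inBk (u v mu r : Z) : Prop :=
  Z.Even (mu - (r - 1)) /\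
  ( (Z.Odd u /\ (0 <= mu <= wpar u v)%Z /\ (1 <= r)%Z /\ (2 * r <= u - 1)%Z)
  \/ (Z.Even u /\
       ( ((0 <= mu <= wpar u v)%Z /\ (1 <= r)%Z /\ (2 * r <= u - 2)%Z)
       \/ ((0 <= mu)%Z /\ (2 * mu <= wpar u v)%Z /\ (2 * r = u)%Z)))).

(* Main.v *)
Require Import Defs.
From Stdlib Require Import Reals ZArith List.
From Stdlib Require Import Lia Lra FunctionalExtensionality PropExtensionality ClassicalEpsilon.
Open Scope R_scope.

Lemma Cx_eq (z w : Cx) : Re z = Re w -> Im z = Im w -> z = w.
Proof. destruct z, w; simpl; intros; subst; reflexivity. Qed.

Fixpoint zps (g : Z -> R) (N : nat) : R :=
  match N with
  | O => g 0%Z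
  | S M => zps g M + (g (Z.of_nat (S M)) + g (- Z.of_nat (S M))%Z)
  end.

Lemma zps_S g M : zps g (S M) = zps g M + (g (Z.of_nat (S M)) + g (- Z.of_nat (S M))%Z).
Proof. reflexivity. Qed.

Lemma Re_zpsum f N : Re (zpsum f N) = zps (fun m => Re (f m)) N.
Proof. induction N; [reflexivity|]. rewrite zps_S, <- IHN; reflexivity. Qed.
Lemma Im_zpsum f N : Im (zpsum f N) = zps (fun m => Im (f m)) N.
Proof. induction N; [reflexivity|]. rewrite zps_S, <- IHN; reflexivity. Qed.

Lemma zps_ext g h N : (forall m, g m = h m) -> zps g N = zps h N.
Proof. intro H; induction N; [apply H|]. rewrite !zps_S, IHN, !H; reflexivity. Qed.

Lemma zps_sub g h N : zps (fun m => g m - h m) N = zps g N - zps h N.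
Proof. induction N; [reflexivity|]. rewrite !zps_S, IHN; ring. Qed.

Lemma zps_neg g N : zps (fun m => g (- m)%Z) N = zps g N.
Proof. induction N; [reflexivity|]. rewrite !zps_S, IHN, Z.opp_involutive; ring. Qed.

Lemma zps_opp g N : zps (fun m => - g m) N = - zps g N.
Proof. induction N; [reflexivity|]. rewrite !zps_S, IHN; ring. Qed.

Lemma zps_shift g N : zps (fun m => g (m + 1)%Z) N = zps g N - g (- Z.of_nat N)%Z + g (Z.of_nat N + 1)%Z.
Proof. induction N.
  - simpl. ring.
  - rewrite !zps_S, IHN.
    replace (Z.of_nat N + 1)%Z with (Z.of_nat (S N)) by lia.
    replace (- Z.of_nat (S N) + 1)%Z with (- Z.of_nat N)%Z by lia.
    ring.
Qed.

Lemma zps_negshift g N : zps (fun m => g (- m - 1)%Z) N = zps g N - g (Z.of_nat N) + g (- Z.of_nat N - 1)%Z.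
Proof.
  rewrite <- (zps_neg (fun m => g (- m - 1)%Z)).
  rewrite (zps_ext _ (fun m => g (m + -1)%Z)) by (intro; f_equal; lia).
  induction N.
  - simpl. ring.
  - rewrite !zps_S, IHN.
    replace (Z.of_nat (S N) + -1)%Z with (Z.of_nat N) by lia.
    replace (- Z.of_nat (S N) + -1)%Z with (- Z.of_nat N - 1 - 1)%Z by lia.
    replace (- Z.of_nat N - 1)%Z with (- Z.of_nat (S N))%Z by lia.
    replace (- Z.of_nat (S N) - 1)%Z with (- Z.of_nat N - 1 - 1)%Z by lia.
    ring.
Qed.

Lemma Un_cv_ext (a b : nat -> R) l : (forall n, a n = b n) -> Un_cv a l -> Un_cv b l.
Proof. intros E H eps He; destruct (H eps He) as [N HN]; exists N; intros n Hn; rewrite <- E; auto. Qed.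

Lemma Clim_spec s l : Climit s l -> Clim s = l.
Proof.
  intro H. unfold Clim.
  assert (H' := epsilon_spec (inhabits C0) (fun l => Climit s l) (ex_intro _ l H)).
  destruct H as [H1 H2], H' as [H3 H4].
  apply Cx_eq; eapply UL_sequence; eauto.
Qed.

Lemma Clim_ext s s' : (forall l, Climit s l <-> Climit s' l) -> Clim s = Clim s'.
Proof.
  intro H. unfold Clim. f_equal. apply functional_extensionality; intro l.
  apply propositional_extensionality; apply H.
Qed.

Lemma Clim_diff s s' :
  Un_cv (fun N => Re (s' N) - Re (s N)) 0 -> Un_cv (fun N => Im (s' N) - Im (s N)) 0 ->
  Clim s' = Clim s.
Proof.
  intros H1 H2. apply Clim_ext; intro l; split; intros [A B]; split.
  - replace (Re l) with (Re l - 0) by ring.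
    eapply Un_cv_ext; [| exact (CV_minus _ _ _ _ A H1)]. intro; simpl; ring.
  - replace (Im l) with (Im l - 0) by ring.
    eapply Un_cv_ext; [| exact (CV_minus _ _ _ _ B H2)]. intro; simpl; ring.
  - replace (Re l) with (Re l + 0) by ring.
    eapply Un_cv_ext; [| exact (CV_plus _ _ _ _ A H1)]. intro; simpl; ring.
  - replace (Im l) with (Im l + 0) by ring.
    eapply Un_cv_ext; [| exact (CV_plus _ _ _ _ B H2)]. intro; simpl; ring.
Qed.


Definition zbound (g : Z -> R) := exists B rho, 0 < rho < 1 /\ forall m, Rabs (g m) <= B * rho ^ (Z.abs_nat m).

Lemma pow_le1' (x : R) n : 0 <= x <= 1 -> 0 <= x ^ n <= 1.
Proof. intro H; induction n; simpl; nra. Qed.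

Lemma pow_decr (rho : R) n k : 0 < rho <= 1 -> (n <= k)%nat -> rho ^ k <= rho ^ n.
Proof.
  intros Hr Hk. replace k with (n + (k - n))%nat by lia. rewrite pow_add.
  assert (0 <= rho ^ n) by (apply pow_le; lra).
  assert (0 <= rho ^ (k - n) <= 1) by (apply pow_le1'; lra).
  nra.
Qed.

Lemma zbound_B g B rho : 0 < rho < 1 -> (forall m, Rabs (g m) <= B * rho ^ (Z.abs_nat m)) -> 0 <= B.
Proof. intros Hr H. specialize (H 0%Z). simpl in H. pose proof (Rabs_pos (g 0%Z)). lra. Qed.

Lemma zbound_cv0 g (h : nat -> Z) : zbound g -> (forall N, (N <= Z.abs_nat (h N))%nat) ->
  Un_cv (fun N => g (h N)) 0.
Proof.
  intros [B [rho [Hr H]]] Hh eps He.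
  pose proof (zbound_B _ _ _ Hr H) as HB.
  destruct (pow_lt_1_zero rho) with (y := eps / (B + 1)) as [N HN].
  - rewrite Rabs_right; lra.
  - apply Rdiv_lt_0_compat; lra.
  - exists N; intros n Hn. unfold R_dist. rewrite Rminus_0_r.
    specialize (HN n Hn). rewrite Rabs_right in HN by (apply Rle_ge, pow_le; lra).
    apply Rle_lt_trans with (B * rho ^ n).
    + eapply Rle_trans; [apply H|]. apply Rmult_le_compat_l; auto. apply pow_decr; auto; lra.
    + assert (0 <= rho ^ n) by (apply pow_le; lra).
      apply Rle_lt_trans with ((B + 1) * rho ^ n); [nra|].
      apply (Rmult_lt_compat_l (B + 1)) in HN; [|lra].
      replace ((B + 1) * (eps / (B + 1))) with eps in HN by (field; lra). exact HN.
Qed.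

Lemma Un_cv_const c : Un_cv (fun _ => c) c.
Proof. intros eps He; exists O; intros; unfold R_dist; rewrite Rminus_diag, Rabs_R0; lra. Qed.

Lemma geom_cv rho B : 0 < rho < 1 -> {l | Un_cv (fun N => sum_f_R0 (fun j => B * rho ^ j) N) l}.
Proof.
  intro Hr. exists (B * / (1 - rho)).
  assert (G : Un_cv (fun N => sum_f_R0 (fun j => 1 * rho ^ j) N) (/ (1 - rho))).
  { apply GP_infinite. rewrite Rabs_right; lra. }
  eapply Un_cv_ext; [| exact (CV_mult _ _ _ _ (Un_cv_const B) G)].
  intro n; simpl. rewrite scal_sum. apply sum_eq; intros; ring.
Qed.

Definition hz (g : Z -> R) (j : nat) : R :=
  match j with O => 0 | S _ => g (Z.of_nat j) + g (- Z.of_nat j)%Z end.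

Lemma zps_hz g N : zps g N = g 0%Z + sum_f_R0 (hz g) N.
Proof. induction N.
  - simpl. rewrite Rplus_0_r. reflexivity.
  - rewrite zps_S, IHN. simpl sum_f_R0. simpl hz. rewrite Rplus_assoc. reflexivity. Qed.

Lemma abs_nat_opp z : Z.abs_nat (- z) = Z.abs_nat z.
Proof. destruct z; reflexivity. Qed.

Lemma zbound_conv g : zbound g -> exists L, Un_cv (zps g) L.
Proof.
  intros [B [rho [Hr H]]].
  pose proof (zbound_B _ _ _ Hr H) as HB.
  assert (Hh : forall j, 0 <= Rabs (hz g j) <= (2 * B) * rho ^ j).
  { intro j; split; [apply Rabs_pos|]. destruct j as [|j]; cbv beta iota delta [hz].
    - rewrite Rabs_R0. assert (0 <= rho ^ 0) by (apply pow_le; lra). nra.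
    - eapply Rle_trans; [apply Rabs_triang|].
      pose proof (H (Z.of_nat (S j))) as H1. pose proof (H (- Z.of_nat (S j))%Z) as H2.
      rewrite abs_nat_opp in H2. rewrite Zabs2Nat.id in H1, H2.
      lra. }
  destruct (Rseries_CV_comp _ _ Hh (geom_cv rho (2 * B) Hr)) as [l1 Hl1].
  destruct (cv_cauchy_2 _ (cauchy_abs _ (cv_cauchy_1 _ (exist _ l1 Hl1)))) as [l Hl].
  exists (g 0%Z + l).
  eapply Un_cv_ext; [| exact (CV_plus _ _ _ _ (Un_cv_const (g 0%Z)) Hl)].
  intro n; rewrite zps_hz; reflexivity.
Qed.

Lemma exp_le' x y : x <= y -> exp x <= exp y.
Proof. intros [H|H]; [left; apply exp_increasing; auto| subst; lra]. Qed.

Lemma exp_nat x n : exp (x * INR n) = exp x ^ n.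
Proof. induction n; simpl pow. - simpl; rewrite Rmult_0_r, exp_0; reflexivity.
  - rewrite S_INR, Rmult_plus_distr_l, Rmult_1_r, exp_plus, IHn; ring. Qed.

Lemma abs_IZR_nat m : Rabs (IZR m) = INR (Z.abs_nat m).
Proof. rewrite <- abs_IZR, INR_IZR_INZ, Nat2Z.inj_abs_nat; reflexivity. Qed.

Lemma decay_pre c d a m : 0 < c -> 0 < d ->
  d * INR (Z.abs_nat m) <= Rabs (a + d * IZR m) + Rabs a.
Proof.
  intros Hc Hd. rewrite <- abs_IZR_nat.
  replace (d * Rabs (IZR m)) with (Rabs ((a + d * IZR m) + - a)).
  - eapply Rle_trans; [apply Rabs_triang|]. rewrite Rabs_Ropp; lra.
  - replace (a + d * IZR m + - a) with (d * IZR m) by ring.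
    rewrite Rabs_mult, (Rabs_right d) by lra. reflexivity.
Qed.

Lemma exp_decay c d a m : 0 < c -> 0 < d ->
  exp (- c * (a + d * IZR m) ^ 2) <= exp (c + c * Rabs a) * exp (- (c * d)) ^ (Z.abs_nat m).
Proof.
  intros Hc Hd. pose proof (decay_pre c d a m Hc Hd) as H1.
  set (M := INR (Z.abs_nat m)) in *. set (L := a + d * IZR m) in *.
  rewrite <- exp_nat, <- exp_plus. apply exp_le'. fold M.
  rewrite <- pow2_abs. set (t := Rabs L) in *.
  assert (0 <= t) by apply Rabs_pos.
  assert (c * (d * M) <= c * (t + Rabs a)) by (apply Rmult_le_compat_l; lra).
  assert (0 <= c * (t^2 - t + 1)) by (apply Rmult_le_pos; nra). nra.
Qed.

Lemma exp_decay2 c d a m : 0 < c -> 0 < d ->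
  Rabs (a + d * IZR m) * exp (- c * (a + d * IZR m) ^ 2)
  <= (exp c / c * exp (c * Rabs a)) * exp (- (c * d)) ^ (Z.abs_nat m).
Proof.
  intros Hc Hd. pose proof (decay_pre c d a m Hc Hd) as H1.
  set (M := INR (Z.abs_nat m)) in *. set (L := a + d * IZR m) in *.
  rewrite <- exp_nat. fold M.
  rewrite <- pow2_abs. set (t := Rabs L) in *.
  assert (0 <= t) by apply Rabs_pos.
  assert (E1 : exp (- c * t ^ 2) <= exp c * exp (- (c * t)) * exp (- (c * t))).
  { rewrite <- !exp_plus. apply exp_le'. assert (0 <= c * (t - 1)^2) by (apply Rmult_le_pos; [lra|apply pow2_ge_0]). assert (c*(t-1)^2 = c*t^2 - 2*(c*t) + c) by ring. lra. }
  assert (E2 : t * exp (- (c * t)) <= / c).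
  { pose proof (exp_ineq1_le (c * t)).
    rewrite exp_Ropp. apply (Rmult_le_reg_l c); [lra|].
    pose proof (exp_pos (c * t)).
    replace (c * (t * / exp (c * t))) with ((c * t) / exp (c * t)) by (field; lra).
    replace (c * / c) with 1 by (field; lra).
    apply (Rmult_le_reg_r (exp (c * t))); [lra|]. unfold Rdiv.
    rewrite Rmult_assoc, Rinv_l by lra. lra. }
  assert (E3 : exp (- (c * t)) <= exp (c * Rabs a) * exp (- (c * d) * M)).
  { rewrite <- exp_plus. apply exp_le'. assert (c * (d * M) <= c * (t + Rabs a)) by (apply Rmult_le_compat_l; lra). nra. }
  pose proof (exp_pos c). pose proof (exp_pos (- (c * t))).
  apply Rle_trans with (t * (exp c * exp (- (c * t)) * exp (- (c * t)))).
  { apply Rmult_le_compat_l; lra. }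
  replace (t * (exp c * exp (- (c * t)) * exp (- (c * t)))) with
    (exp c * (t * exp (- (c * t))) * exp (- (c * t))) by ring.
  apply Rle_trans with (exp c * / c * exp (- (c * t))).
  { apply Rmult_le_compat_r; [lra|]. apply Rmult_le_compat_l; lra. }
  unfold Rdiv. rewrite !Rmult_assoc. apply Rmult_le_compat_l; [lra|].
  apply Rmult_le_compat_l; [left; apply Rinv_0_lt_compat; lra|]. exact E3.
Qed.


Lemma qpow_bound e x y : Rabs (Re (qpow e x y)) <= exp (-2 * PI * e * y) /\ Rabs (Im (qpow e x y)) <= exp (-2 * PI * e * y).
Proof.
  unfold qpow; simpl. pose proof (exp_pos (-2 * PI * e * y)).
  rewrite !Rabs_mult, (Rabs_right (exp _)) by lra.
  pose proof (COS_bound (2 * PI * e * x)). pose proof (SIN_bound (2 * PI * e * x)).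
  split; (rewrite <- (Rmult_1_r (exp _)) at 2; apply Rmult_le_compat_l; [lra|apply Rabs_le; lra]).
Qed.

Lemma lamq_bound lam e x y :
  Rabs (Re (Cmul (RtoC lam) (qpow e x y))) <= Rabs lam * exp (-2 * PI * e * y) /\
  Rabs (Im (Cmul (RtoC lam) (qpow e x y))) <= Rabs lam * exp (-2 * PI * e * y).
Proof.
  destruct (qpow_bound e x y) as [H1 H2].
  assert (E1 : Re (Cmul (RtoC lam) (qpow e x y)) = lam * Re (qpow e x y)) by (simpl; ring).
  assert (E2 : Im (Cmul (RtoC lam) (qpow e x y)) = lam * Im (qpow e x y)) by (simpl; ring).
  rewrite E1, E2, !Rabs_mult. pose proof (Rabs_pos lam).
  split; apply Rmult_le_compat_l; auto.
Qed.

Definition Ft (u v : Z) (a x y : R) (m : Z) : Cx :=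
  let lam := a + IZR (2 * wpar u v * m) in
  Cmul (RtoC lam) (qpow (- lam ^ 2 / (4 * klev u v)) x y).

Lemma theta'_Ft u v a x y : theta' u v a x y = Cmul (RtoC (- 1 / (2 * IZR (wpar u v)))) (Clim (zpsum (Ft u v a x y))).
Proof. reflexivity. Qed.

Lemma Ft_bound u v a x y : klev u v < 0 -> (0 < wpar u v)%Z -> 0 < y ->
  zbound (fun m => Re (Ft u v a x y m)) /\ zbound (fun m => Im (Ft u v a x y m)).
Proof.
  intros Hk Hw Hy.
  set (c := - (2 * PI * y) / (4 * klev u v)).
  set (d := IZR (2 * wpar u v)).
  assert (Hc : 0 < c).
  { replace c with ((2 * PI * y) / (- (4 * klev u v))) by (unfold c; field; lra).
    apply Rdiv_lt_0_compat; [pose proof PI_RGT_0; nra|lra]. }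
  assert (Hd : 0 < d) by (unfold d; apply IZR_lt; lia).
  assert (Hr : 0 < exp (- (c * d)) < 1).
  { split; [apply exp_pos|]. rewrite <- exp_0. apply exp_increasing. nra. }
  assert (HB : forall m, Rabs (Re (Ft u v a x y m)) <= (exp c / c * exp (c * Rabs a)) * exp (- (c * d)) ^ (Z.abs_nat m) /\
                         Rabs (Im (Ft u v a x y m)) <= (exp c / c * exp (c * Rabs a)) * exp (- (c * d)) ^ (Z.abs_nat m)).
  { intro m. unfold Ft. cbv zeta.
    assert (El : a + IZR (2 * wpar u v * m) = a + d * IZR m) by (unfold d; rewrite mult_IZR; reflexivity).
    rewrite El.
    destruct (lamq_bound (a + d * IZR m) (- (a + d * IZR m) ^ 2 / (4 * klev u v)) x y) as [H1 H2].
    replace (-2 * PI * (- (a + d * IZR m) ^ 2 / (4 * klev u v)) * y) with (- c * (a + d * IZR m) ^ 2) in H1, H2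
      by (unfold c; field; lra).
    pose proof (exp_decay2 c d a m Hc Hd). split; lra. }
  split; exists (exp c / c * exp (c * Rabs a)), (exp (- (c * d))); split; auto; intro m; apply HB.
Qed.

Lemma cv0_plus1 g : zbound g -> Un_cv (fun N => g (Z.of_nat N + 1)%Z) 0.
Proof.
  intro H. apply (zbound_cv0 g (fun N => (Z.of_nat N + 1)%Z) H).
  intro N. replace (Z.of_nat N + 1)%Z with (Z.of_nat (S N)) by lia. rewrite Zabs2Nat.id. lia.
Qed.
Lemma cv0_opp g : zbound g -> Un_cv (fun N => g (- Z.of_nat N)%Z) 0.
Proof.
  intro H. apply (zbound_cv0 g (fun N => (- Z.of_nat N)%Z) H).
  intro N. rewrite abs_nat_opp, Zabs2Nat.id. lia.
Qed.
Lemma cv0_id g : zbound g -> Un_cv (fun N => g (Z.of_nat N)) 0.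
Proof.
  intro H. apply (zbound_cv0 g (fun N => Z.of_nat N) H).
  intro N. rewrite Zabs2Nat.id. lia.
Qed.
Lemma cv0_oppm1 g : zbound g -> Un_cv (fun N => g (- Z.of_nat N - 1)%Z) 0.
Proof.
  intro H. apply (zbound_cv0 g (fun N => (- Z.of_nat N - 1)%Z) H).
  intro N. replace (- Z.of_nat N - 1)%Z with (- Z.of_nat (S N))%Z by lia.
  rewrite abs_nat_opp, Zabs2Nat.id. lia.
Qed.

Lemma CV_minus0 a b : Un_cv a 0 -> Un_cv b 0 -> Un_cv (fun i => a i - b i) 0.
Proof. intros H1 H2. pose proof (CV_minus _ _ _ _ H1 H2) as H. rewrite Rminus_0_r in H. exact H. Qed.

Lemma Ft_shift u v a x y m : Ft u v (a + IZR (2 * wpar u v)) x y m = Ft u v a x y (m + 1).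
Proof.
  unfold Ft. cbv zeta.
  assert (E : a + IZR (2 * wpar u v) + IZR (2 * wpar u v * m) = a + IZR (2 * wpar u v * (m + 1)))
    by (rewrite !mult_IZR, plus_IZR; ring).
  rewrite E; reflexivity.
Qed.

Lemma theta'_shift u v a x y : klev u v < 0 -> (0 < wpar u v)%Z -> 0 < y ->
  theta' u v (a + IZR (2 * wpar u v)) x y = theta' u v a x y.
Proof.
  intros Hk Hw Hy. rewrite !theta'_Ft. f_equal.
  destruct (Ft_bound u v a x y Hk Hw Hy) as [B1 B2].
  apply Clim_diff.
  - eapply Un_cv_ext; [| exact (CV_minus0 _ _ (cv0_plus1 _ B1) (cv0_opp _ B1))].
    intro n. rewrite !Re_zpsum. rewrite (zps_ext _ (fun m => Re (Ft u v a x y (m + 1)))) by (intro; rewrite Ft_shift; reflexivity).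
    rewrite (zps_shift (fun m => Re (Ft u v a x y m))). ring.
  - eapply Un_cv_ext; [| exact (CV_minus0 _ _ (cv0_plus1 _ B2) (cv0_opp _ B2))].
    intro n. rewrite !Im_zpsum. rewrite (zps_ext _ (fun m => Im (Ft u v a x y (m + 1)))) by (intro; rewrite Ft_shift; reflexivity).
    rewrite (zps_shift (fun m => Im (Ft u v a x y m))). ring.
Qed.

Lemma Ft_neg u v a x y m : Ft u v (- a) x y m = Copp (Ft u v a x y (- m)).
Proof.
  unfold Ft. cbv zeta.
  assert (E : - a + IZR (2 * wpar u v * m) = - (a + IZR (2 * wpar u v * - m)))
    by (rewrite !mult_IZR, opp_IZR; ring).
  rewrite E. set (L := a + IZR (2 * wpar u v * - m)).
  replace ((- L) ^ 2) with (L ^ 2) by ring.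
  apply Cx_eq; simpl; ring.
Qed.

Lemma theta'_neg u v a x y : klev u v < 0 -> (0 < wpar u v)%Z -> 0 < y ->
  theta' u v (- a) x y = Copp (theta' u v a x y).
Proof.
  intros Hk Hw Hy. rewrite !theta'_Ft.
  destruct (Ft_bound u v a x y Hk Hw Hy) as [B1 B2].
  destruct (zbound_conv _ B1) as [L1 H1]. destruct (zbound_conv _ B2) as [L2 H2].
  assert (C1 : Clim (zpsum (Ft u v a x y)) = mkC L1 L2).
  { apply Clim_spec. split; simpl.
    - eapply Un_cv_ext; [|exact H1]. intro; rewrite Re_zpsum; reflexivity.
    - eapply Un_cv_ext; [|exact H2]. intro; rewrite Im_zpsum; reflexivity. }
  assert (C2 : Clim (zpsum (Ft u v (- a) x y)) = mkC (- L1) (- L2)).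
  { apply Clim_spec. split; simpl.
    - eapply Un_cv_ext; [|exact (CV_opp _ _ H1)]. intro; rewrite Re_zpsum. unfold opp_seq. symmetry.
      rewrite (zps_ext _ (fun m => - Re (Ft u v a x y (- m)))) by (intro; rewrite Ft_neg; reflexivity).
      rewrite zps_opp, (zps_neg (fun m => Re (Ft u v a x y m))). reflexivity.
    - eapply Un_cv_ext; [|exact (CV_opp _ _ H2)]. intro; rewrite Im_zpsum. unfold opp_seq. symmetry.
      rewrite (zps_ext _ (fun m => - Im (Ft u v a x y (- m)))) by (intro; rewrite Ft_neg; reflexivity).
      rewrite zps_opp, (zps_neg (fun m => Im (Ft u v a x y m))). reflexivity. }
  rewrite C1, C2. apply Cx_eq; simpl; ring.
Qed.


Lemma zbound_ext g h : (forall m, g m = h m) -> zbound g -> zbound h.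
Proof. intros E [B [r [Hr H]]]; exists B, r; split; auto; intro m; rewrite <- E; auto. Qed.

Lemma qB_bound (u v p : Z) x y : (0 < u)%Z -> (0 < v)%Z -> 0 < y ->
  zbound (fun m => Re (qpow (IZR ((2*u*v*m + p)^2) / IZR (4*u*v)) x y)) /\
  zbound (fun m => Im (qpow (IZR ((2*u*v*m + p)^2) / IZR (4*u*v)) x y)).
Proof.
  intros Hu Hv Hy.
  set (c := 2 * PI * y / IZR (4*u*v)).
  set (d := IZR (2*u*v)). set (a := IZR p).
  assert (H4 : 0 < IZR (4*u*v)) by (apply IZR_lt; nia).
  assert (Hc : 0 < c) by (unfold c; apply Rdiv_lt_0_compat; [pose proof PI_RGT_0; nra|lra]).
  assert (Hd : 0 < d) by (unfold d; apply IZR_lt; nia).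
  assert (Hr : 0 < exp (- (c * d)) < 1).
  { split; [apply exp_pos|]. rewrite <- exp_0. apply exp_increasing. nra. }
  assert (HB : forall m, Rabs (Re (qpow (IZR ((2*u*v*m + p)^2) / IZR (4*u*v)) x y)) <= exp (c + c * Rabs a) * exp (- (c * d)) ^ (Z.abs_nat m) /\
                         Rabs (Im (qpow (IZR ((2*u*v*m + p)^2) / IZR (4*u*v)) x y)) <= exp (c + c * Rabs a) * exp (- (c * d)) ^ (Z.abs_nat m)).
  { intro m.
    assert (El : IZR ((2*u*v*m + p)^2) = (a + d * IZR m) ^ 2).
    { rewrite <- (pow_IZR _ 2). unfold a, d. rewrite plus_IZR, mult_IZR. ring. }
    rewrite El.
    destruct (qpow_bound ((a + d * IZR m) ^ 2 / IZR (4*u*v)) x y) as [H1 H2].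
    replace (-2 * PI * ((a + d * IZR m) ^ 2 / IZR (4*u*v)) * y) with (- c * (a + d * IZR m) ^ 2) in H1, H2
      by (unfold c; field; lra).
    pose proof (exp_decay c d a m Hc Hd). split; lra. }
  split; exists (exp (c + c * Rabs a)), (exp (- (c * d))); split; auto; intro m; apply HB.
Qed.

Lemma chi_sym u v r s x y : (0 < u)%Z -> (0 < v)%Z -> 0 < y ->
  chi u v (u - r) (v - s) x y = chi u v r s x y.
Proof.
  intros Hu Hv Hy. unfold chi. f_equal. unfold zsum.
  set (A := fun m => qpow (IZR ((2*u*v*m + (v*r - u*s))^2) / IZR (4*u*v)) x y).
  set (B := fun m => qpow (IZR ((2*u*v*m + (v*r + u*s))^2) / IZR (4*u*v)) x y).
  assert (E1 : forall n, Csub (qpow (IZR ((2*u*v*n + v*(u-r) - u*(v-s))^2) / IZR (4*u*v)) x y)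
                             (qpow (IZR ((2*u*v*n + v*(u-r) + u*(v-s))^2) / IZR (4*u*v)) x y)
                       = Csub (A (- n)%Z) (B (- n - 1)%Z)).
  { intro n. unfold A, B.
    replace ((2*u*v*n + v*(u-r) - u*(v-s))^2)%Z with ((2*u*v*(-n) + (v*r - u*s))^2)%Z by ring.
    replace ((2*u*v*n + v*(u-r) + u*(v-s))^2)%Z with ((2*u*v*(-n-1) + (v*r + u*s))^2)%Z by ring.
    reflexivity. }
  assert (E2 : forall n, Csub (qpow (IZR ((2*u*v*n + v*r - u*s)^2) / IZR (4*u*v)) x y)
                             (qpow (IZR ((2*u*v*n + v*r + u*s)^2) / IZR (4*u*v)) x y)
                       = Csub (A n) (B n)).
  { intro n. unfold A, B.
    replace ((2*u*v*n + v*r - u*s))%Z with ((2*u*v*n + (v*r - u*s)))%Z by ring.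
    replace ((2*u*v*n + v*r + u*s))%Z with ((2*u*v*n + (v*r + u*s)))%Z by ring.
    reflexivity. }
  destruct (qB_bound u v (v*r + u*s) x y Hu Hv Hy) as [B1 B2].
  fold B in B1, B2.
  apply Clim_diff.
  - eapply Un_cv_ext; [| exact (CV_minus0 _ _ (cv0_id _ B1) (cv0_oppm1 _ B1))].
    intro n. rewrite !Re_zpsum.
    rewrite (zps_ext _ (fun m => Re (A (- m)%Z) - Re (B (- m - 1)%Z))) by (intro; rewrite E1; simpl; ring).
    rewrite (zps_ext (fun m => Re (Csub _ _)) (fun m => Re (A m) - Re (B m))) by (intro; rewrite E2; simpl; ring).
    rewrite !zps_sub, (zps_neg (fun m => Re (A m))), (zps_negshift (fun m => Re (B m))). subst A B; cbv beta; ring.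
  - eapply Un_cv_ext; [| exact (CV_minus0 _ _ (cv0_id _ B2) (cv0_oppm1 _ B2))].
    intro n. rewrite !Im_zpsum.
    rewrite (zps_ext _ (fun m => Im (A (- m)%Z) - Im (B (- m - 1)%Z))) by (intro; rewrite E1; simpl; ring).
    rewrite (zps_ext (fun m => Im (Csub _ _)) (fun m => Im (A m) - Im (B m))) by (intro; rewrite E2; simpl; ring).
    rewrite !zps_sub, (zps_neg (fun m => Im (A m))), (zps_negshift (fun m => Im (B m))). subst A B; cbv beta; ring.
Qed.


Definition Gterm (u v mu r : Z) (x y : R) (n : nat) : Cx :=
    let s := Z.of_nat n in
    let ks := IZR s * klev u v in
    Cmul (RtoC ((-1) ^ (n - 1)))
      (Cmul (Cdiv (chi u v r s x y) (eta x y))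
            (Csub (theta' u v (IZR mu + ks) x y)
                  (theta' u v (IZR mu - ks) x y))).

Lemma Gamma_G u v mu r x y : Gamma u v mu r x y = Csum (map (Gterm u v mu r x y) (seq 1 (Z.to_nat v - 1))).
Proof. reflexivity. Qed.

Lemma Gamma_shift u v mu r x y : klev u v < 0 -> (0 < wpar u v)%Z -> 0 < y ->
  Gamma u v (mu + 2 * wpar u v) r x y = Gamma u v mu r x y.
Proof.
  intros Hk Hw Hy. rewrite !Gamma_G. f_equal. apply map_ext. intro n. unfold Gterm. cbv zeta.
  rewrite plus_IZR.
  replace (IZR mu + IZR (2 * wpar u v) + IZR (Z.of_nat n) * klev u v)
    with ((IZR mu + IZR (Z.of_nat n) * klev u v) + IZR (2 * wpar u v)) by ring.
  replace (IZR mu + IZR (2 * wpar u v) - IZR (Z.of_nat n) * klev u v)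
    with ((IZR mu - IZR (Z.of_nat n) * klev u v) + IZR (2 * wpar u v)) by ring.
  rewrite !theta'_shift by auto. reflexivity.
Qed.

Lemma Csub_opp a b : Csub (Copp a) (Copp b) = Csub b a.
Proof. apply Cx_eq; simpl; ring. Qed.

Lemma Gamma_neg u v mu r x y : klev u v < 0 -> (0 < wpar u v)%Z -> 0 < y ->
  Gamma u v (- mu) r x y = Gamma u v mu r x y.
Proof.
  intros Hk Hw Hy. rewrite !Gamma_G. f_equal. apply map_ext. intro n. unfold Gterm. cbv zeta.
  rewrite opp_IZR.
  replace (- IZR mu + IZR (Z.of_nat n) * klev u v) with (- (IZR mu - IZR (Z.of_nat n) * klev u v)) by ring.
  replace (- IZR mu - IZR (Z.of_nat n) * klev u v) with (- (IZR mu + IZR (Z.of_nat n) * klev u v)) by ring.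
  rewrite !theta'_neg by auto. rewrite Csub_opp. reflexivity.
Qed.

Lemma Csum_app l1 l2 : Csum (l1 ++ l2) = Cadd (Csum l1) (Csum l2).
Proof. induction l1; simpl. - apply Cx_eq; simpl; ring. - rewrite IHl1. apply Cx_eq; simpl; ring. Qed.

Lemma Csum_rev (f : nat -> Cx) n : Csum (map f (seq 1 n)) = Csum (map (fun i => f (S n - i)%nat) (seq 1 n)).
Proof.
  induction n; [reflexivity|].
  transitivity (Cadd (f (S n)) (Csum (map f (seq 1 n)))).
  - rewrite seq_S, map_app, Csum_app. replace (1 + n)%nat with (S n) by lia.
    apply Cx_eq; simpl; ring.
  - rewrite IHn. change (seq 1 (S n)) with (1%nat :: seq 2 n). cbn [map Csum].
    rewrite <- (seq_shift n 1), map_map. reflexivity.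
Qed.

Lemma Csum_map_Cmul {A} c (f : A -> Cx) l : Cmul c (Csum (map f l)) = Csum (map (fun t => Cmul c (f t)) l).
Proof. induction l; simpl. - apply Cx_eq; simpl; ring. - rewrite <- IHl. apply Cx_eq; simpl; ring. Qed.

Lemma sign_sq a : (-1) ^ a * (-1) ^ a = 1.
Proof. induction a; simpl; [ring|]. transitivity ((-1) ^ a * (-1) ^ a); [ring|exact IHa]. Qed.

Lemma sign_lemma V i : (1 <= i)%nat -> (i <= V - 1)%nat ->
  (-1) ^ (V - i - 1) = (-1) ^ V * (-1) ^ (i - 1).
Proof.
  intros H1 H2. set (a := (i - 1)%nat). set (b := (V - i - 1)%nat).
  assert (HV : V = (a + b + 2)%nat) by (unfold a, b; lia).
  rewrite HV, !pow_add. pose proof (sign_sq a).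
  transitivity ((-1) ^ b * ((-1) ^ a * (-1) ^ a)); [rewrite H; ring | simpl; ring].
Qed.

Lemma sign_C (s1 s2 sV : R) X T1 T2 : s1 = sV * s2 ->
  Cmul (RtoC s1) (Cmul X (Csub T1 T2)) = Cmul (RtoC (- sV)) (Cmul (RtoC s2) (Cmul X (Csub T2 T1))).
Proof. intro H; subst. apply Cx_eq; simpl; ring. Qed.

Lemma Gamma_refl u v mu r x y : (2 <= u)%Z -> (2 <= v)%Z -> klev u v < 0 -> (0 < wpar u v)%Z -> 0 < y ->
  Gamma u v mu (u - r) x y = Cmul (RtoC (- (-1) ^ (Z.to_nat v))) (Gamma u v (mu - wpar u v) r x y).
Proof.
  intros Hu Hv Hk Hw Hy. rewrite !Gamma_G, Csum_map_Cmul.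
  set (V := Z.to_nat v).
  rewrite Csum_rev. replace (S (V - 1)) with V by (unfold V; lia).
  f_equal. apply map_ext_in. intros i Hi. apply in_seq in Hi.
  unfold Gterm. cbv zeta.
  assert (HV : (2 <= V)%nat) by (unfold V; lia).
  assert (Es : Z.of_nat (V - i) = (v - Z.of_nat i)%Z).
  { rewrite Nat2Z.inj_sub by lia. unfold V. rewrite Z2Nat.id by lia. reflexivity. }
  rewrite Es, chi_sym by (try lia; auto).
  assert (Hv0 : IZR v <> 0) by (apply not_0_IZR; lia).
  assert (Hvk : IZR v * klev u v = - IZR (wpar u v)).
  { unfold klev, wpar. rewrite minus_IZR, mult_IZR. field. auto. }
  set (k := klev u v) in *.
  replace (IZR mu + IZR (v - Z.of_nat i) * k) with (IZR (mu - wpar u v) - IZR (Z.of_nat i) * k)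
    by (rewrite !minus_IZR; lra).
  replace (IZR mu - IZR (v - Z.of_nat i) * k) with ((IZR (mu - wpar u v) + IZR (Z.of_nat i) * k) + IZR (2 * wpar u v))
    by (rewrite !minus_IZR, mult_IZR; lra).
  rewrite theta'_shift by auto.
  apply sign_C. apply sign_lemma; lia.
Qed.


Lemma Cmul_1 z : Cmul Defs.C1 z = z.
Proof. apply Cx_eq; simpl; ring. Qed.
Lemma Cmul_assoc a b z : Cmul a (Cmul b z) = Cmul (Cmul a b) z.
Proof. apply Cx_eq; simpl; ring. Qed.

Lemma Gamma_per u v r x y : klev u v < 0 -> (0 < wpar u v)%Z -> 0 < y ->
  forall q mu, Gamma u v (mu + 2 * wpar u v * q) r x y = Gamma u v mu r x y.
Proof.
  intros Hk Hw Hy.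
  assert (Hn : forall n mu, Gamma u v (mu + 2 * wpar u v * Z.of_nat n) r x y = Gamma u v mu r x y).
  { induction n; intro mu.
    - rewrite Z.mul_0_r, Z.add_0_r; reflexivity.
    - replace (mu + 2 * wpar u v * Z.of_nat (S n))%Z with ((mu + 2 * wpar u v * Z.of_nat n) + 2 * wpar u v)%Z by lia.
      rewrite Gamma_shift by auto. apply IHn. }
  intros q mu. destruct (Z_le_gt_dec 0 q).
  - replace q with (Z.of_nat (Z.to_nat q)) by lia. apply Hn.
  - rewrite <- (Hn (Z.to_nat (- q)) (mu + 2 * wpar u v * q)%Z).
    f_equal. rewrite Z2Nat.id by lia. ring.
Qed.

Lemma reduce u v (hu : (2 <= u)%Z) (hv : (2 <= v)%Z) (huv : (u < 2 * v)%Z) :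
  forall r mu : Z, (1 <= r <= u - 1)%Z -> Z.Even (mu - (r - 1)) ->
  exists c m r', inBk u v m r' /\
    forall x y, 0 < y -> Gamma u v mu r x y = Cmul c (Gamma u v m r' x y).
Proof.
  intros r mu Hr [k Hk].
  assert (Hkl : klev u v < 0).
  { unfold klev. assert (IZR u < 2 * IZR v) by (rewrite <- mult_IZR; apply IZR_lt; lia).
    assert (0 < IZR v) by (apply IZR_lt; lia).
    assert (IZR u / IZR v < 2). { apply (Rmult_lt_reg_r (IZR v)); auto. unfold Rdiv. rewrite Rmult_assoc, Rinv_l by lra. lra. }
    lra. }
  assert (Hw : (0 < wpar u v)%Z) by (unfold wpar; lia).
  set (w := wpar u v) in *.
  set (c0 := RtoC (- (-1) ^ (Z.to_nat v))).
  assert (SA : exists c1 mu1 r1 k1, (1 <= r1)%Z /\ (2 * r1 <= u)%Z /\ (mu1 - (r1 - 1) = 2 * k1)%Z /\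
     forall x y, 0 < y -> Gamma u v mu r x y = Cmul c1 (Gamma u v mu1 r1 x y)).
  { destruct (Z_le_gt_dec (2 * r) u).
    - exists Defs.C1, mu, r, k. repeat split; try lia. intros; rewrite Cmul_1; reflexivity.
    - exists c0, (mu - w)%Z, (u - r)%Z, (k + r - v)%Z. repeat split; try (unfold w, wpar in *; lia).
      intros x y Hy. replace r with (u - (u - r))%Z at 1 by lia.
      apply Gamma_refl; auto. }
  destruct SA as [c1 [mu1 [r1 [k1 [Hr1 [Hr1u [Hk1 E1]]]]]]].
  assert (Hw2 : (0 < 2 * w)%Z) by lia.
  set (q := (mu1 / (2 * w))%Z). set (mu2 := (mu1 mod (2 * w))%Z).
  assert (Hdm : mu1 = (2 * w * q + mu2)%Z) by (apply Z.div_mod; lia).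
  assert (Hmu2 : (0 <= mu2 < 2 * w)%Z) by (apply Z.mod_pos_bound; lia).
  assert (E2 : forall x y, 0 < y -> Gamma u v mu1 r1 x y = Gamma u v mu2 r1 x y).
  { intros x y Hy. rewrite Hdm. replace (2 * w * q + mu2)%Z with (mu2 + 2 * wpar u v * q)%Z by (unfold w; ring).
    apply Gamma_per; auto. }
  assert (Hk2 : (mu2 - (r1 - 1) = 2 * (k1 - w * q))%Z) by nia.
  assert (SC : exists mu3 k3, (0 <= mu3 <= w)%Z /\ (mu3 - (r1 - 1) = 2 * k3)%Z /\
     forall x y, 0 < y -> Gamma u v mu2 r1 x y = Gamma u v mu3 r1 x y).
  { destruct (Z_le_gt_dec mu2 w).
    - exists mu2, (k1 - w * q)%Z. repeat split; try lia; auto.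
    - exists (- mu2 + 2 * w)%Z, (w - (k1 - w * q) - (r1 - 1))%Z. repeat split; try lia.
      intros x y Hy. unfold w. rewrite Gamma_shift, Gamma_neg; auto. }
  destruct SC as [mu3 [k3 [Hmu3 [Hk3 E3]]]].
  destruct (Z.Even_or_Odd u) as [[j Hj] | [j Hj]].
  -
    destruct (Z_le_gt_dec (2 * r1) (u - 2)).
    + exists c1, mu3, r1. split.
      * split; [exists k3; lia|]. right. split; [exists j; lia|]. left. lia.
      * intros x y Hy. rewrite E1, E2, E3; auto.
    + destruct (Z_le_gt_dec (2 * mu3) w).
      * exists c1, mu3, r1. split.
        -- split; [exists k3; lia|]. right. split; [exists j; lia|]. right. lia.
        -- intros x y Hy. rewrite E1, E2, E3; auto.
      * exists (Cmul c1 c0), (w - mu3)%Z, r1. split.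
        -- split; [exists (v - 2 * r1 - k3 + 1)%Z; unfold w, wpar in *; lia|].
           right. split; [exists j; lia|]. right. lia.
        -- intros x y Hy. rewrite E1, E2, E3 by auto. rewrite <- Cmul_assoc. f_equal.
           replace r1 with (u - r1)%Z at 1 by lia. rewrite Gamma_refl by auto.
           f_equal. rewrite <- (Gamma_neg u v (mu3 - wpar u v)) by auto. f_equal. unfold w. lia.
  -
    exists c1, mu3, r1. split.
    + split; [exists k3; lia|]. left. split; [exists j; lia|]. lia.
    + intros x y Hy. rewrite E1, E2, E3; auto.
Qed.


Theorem mainTheorem11 (u v : Z)
  (hu : (2 <= u)%Z) (hv : (2 <= v)%Z) (hcop : Z.gcd u v = 1%Z) (huv : (u < 2 * v)%Z) :
  forall r mu : Z, (1 <= r <= u - 1)%Z -> Z.Even (mu - (r - 1)) ->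
  exists l : list (Cx * Z * Z),
    (forall c m r', In (c, m, r') l -> inBk u v m r') /\
    (forall x y : R, 0 < y ->
       Gamma u v mu r x y =
       Csum (map (fun t => let '(c, m, r') := t in Cmul c (Gamma u v m r' x y)) l)).
Proof.
  intros r mu Hr Hp.
  destruct (reduce u v hu hv huv r mu Hr Hp) as [c [m [r' [HB HE]]]].
  exists ((c, m, r') :: nil). split.
  - intros c' m' r'' [H|[]]. inversion H; subst; auto.
  - intros x y Hy. rewrite (HE x y Hy). simpl. apply Cx_eq; simpl; ring.
Qed.
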